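(* There is a nonnegative smooth function $f$ on $\mathbb{R}^d$ such that $f(x)=|x|^2$ if $|x|\le1$, $f(x)=2$ if $|x|\ge2$, and $|\nabla f(x)|+|\nabla^2f(x)|\le C_1\mathbf{1}_{\{|x|\le2\}}$ for some constant $C_1>0$; and such that for any constant $C_2>0$ there exists a constant $C_3>0$ such that for all $\delta>0$, $r\in[0,1]$ and $x,y\in\mathbb{R}^d$ with $|y|\le C_2\big((|x|+\delta)\wedge1\big)$, $$|y||\nabla f(x+ry)|\le C_3(f(x)+\delta),\qquad|y|^2|\nabla^2f(x+ry)|\le C_3(f(x)+\delta^2).$$ *)

(* Defs.v *)
(* R^d is 'rV[R]_d. *)
From HB Require Import structures.
From mathcomp Require Import all_boot all_order all_algebra.
From mathcomp Require Import all_classical all_reals all_analysis.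
Set Implicit Arguments. Unset Strict Implicit. Unset Printing Implicit Defensive.
Import Order.TTheory GRing.Theory Num.Theory.
Import numFieldNormedType.Exports.
Local Open Scope ring_scope.

Section Defs.
Context {R : realType} {d : nat}.

Definition ebasis (i : 'I_d) : 'rV[R]_d := delta_mx 0 i.

Definition enorm (x : 'rV[R]_d) : R := Num.sqrt (\sum_i x 0 i ^+ 2).

Definition frobnorm (A : 'M[R]_d) : R := Num.sqrt (\sum_i \sum_j A i j ^+ 2).

(* iterated partial derivative: dpartial [:: i1; ...; ik] f = D_i1 (... (D_ik f)) *)
Definition dpartial (s : seq 'I_d) (f : 'rV[R]_d -> R) : 'rV[R]_d -> R :=
  foldr (fun i g => fun x => 'D_(ebasis i) g x) f s.

Definition smooth (f : 'rV[R]_d -> R) : Prop :=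
  forall s : seq 'I_d,
    continuous (dpartial s f) /\
    (forall (i : 'I_d) (x : 'rV[R]_d), derivable (dpartial s f) x (ebasis i)).

Definition grad (f : 'rV[R]_d -> R) (x : 'rV[R]_d) : 'rV[R]_d :=
  \row_i dpartial [:: i] f x.

Definition hess (f : 'rV[R]_d -> R) (x : 'rV[R]_d) : 'M[R]_d :=
  \matrix_(i, j) dpartial [:: i; j] f x.

End Defs.

(* Main.v *)
Require Import Defs.
From HB Require Import structures.
From mathcomp Require Import all_boot all_order all_algebra.
From mathcomp Require Import all_classical all_reals all_analysis.
From mathcomp Require Import ring lra.
Import Order.TTheory GRing.Theory Num.Theory.
Import numFieldNormedType.Exports.
Local Open Scope classical_set_scope.
Local Open Scope ring_scope.
Unset Printing Implicit Defensive.

Section OneD.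
Variable R : realType.

Definition psi (k : nat) (t : R) : R :=
  if 0 < t then t^-1 ^+ k * expR (- t^-1) else 0.

Lemma psi_ge0 k t : 0 <= psi k t.
Proof.
rewrite /psi; case: ifP => // t0.
by rewrite mulr_ge0 ?expR_ge0 // exprn_ge0 // invr_ge0 ltW.
Qed.

Lemma psi_le k t : 0 < t -> psi k t <= (k.+1)`!%:R * t.
Proof.
move=> t0; rewrite /psi t0.
set u := t^-1.
have u0 : 0 < u by rewrite invr_gt0.
have F0 : 0 < (k.+1)`!%:R :> R by rewrite ltr0n fact_gt0.
have E := @expR_ge1Dxn R u k (ltW u0).
have E0 : 0 < expR u := expR_gt0 u.
rewrite expRN.
have tu : t = u^-1 by rewrite invrK.
rewrite tu.
rewrite ler_pdivrMr //.
have H : u ^+ k.+1 <= (k.+1)`!%:R * expR u.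
  rewrite -ler_pdivrMl // mulrC.
  apply: le_trans E; lra.
rewrite exprS in H.
rewrite -(@ler_pM2l _ u) //.
apply: le_trans H _.
rewrite mulrA mulrCA mulrV ?mulr1 //; last by rewrite unitfE gt_eqF.
Qed.

Lemma psi0 k t : t <= 0 -> psi k t = 0.
Proof. by move=> t0; rewrite /psi ltNge t0. Qed.

Lemma psi_bound k t : psi k t <= (k.+1)`!%:R * `|t|.
Proof.
have [t0|t0] := ltP 0 t.
  by rewrite gtr0_norm //; apply: psi_le.
by rewrite psi0 // mulr_ge0.
Qed.

Lemma psi_cont0 k : psi k x @[x --> (0:R)] --> 0.
Proof.
apply: (@squeeze_cvgr _ _ _ _ (cst 0) (fun x => (k.+1)`!%:R * `|x|)).
- by near=> x; rewrite psi_ge0 psi_bound.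
- exact: cvg_cst.
- rewrite [X in _ --> X](_ : 0 = (k.+1)`!%:R * `|0:R|); last by rewrite normr0 mulr0.
  apply: cvgMr.
  exact: (@norm_continuous _ R 0).
Unshelve. all: by end_near.
Qed.

Lemma is_derive_inv (x : R) : x != 0 -> is_derive x 1 (fun y : R => y^-1) (- x ^- 2).
Proof.
move=> x0; apply: DeriveDef.
  by apply: (@derivableV _ _ id) => //; exact: derivable_id.
rewrite (@deriveV _ _ id) //.
by rewrite derive_id /GRing.scale /= mulr1.
Qed.

Lemma is_derive1_comp {f g : R -> R} {x df dg : R} :
  is_derive x 1 f df -> is_derive (f x) 1 g dg -> is_derive x 1 (g \o f) (dg * df).
Proof.
move=> [Hf Ef] [Hg Eg]; apply: DeriveDef.
  apply/derivable1_diffP; apply: differentiable_comp; exact/derivable1_diffP.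
by rewrite -derive1E derive1_comp // !derive1E Ef Eg.
Qed.

Definition psip (k : nat) (t : R) : R := t^-1 ^+ k * expR (- t^-1).

Lemma psip_derive (k : nat) (t : R) : 0 < t ->
  is_derive t 1 (psip k) (psip k.+2 t - k%:R * psip k.+1 t).
Proof.
move=> t0; have tn0 : t != 0 by rewrite gt_eqF.
have HA : is_derive t 1 ((fun s : R => s^-1) ^+ k) ((k%:R * t^-1 ^+ k.-1) *: (- t ^- 2)).
  by apply: is_deriveX; exact: is_derive_inv.
have HB : is_derive t 1 (expR \o (fun s : R => - s^-1)) (expR (- t^-1) * (- - t ^- 2)).
  apply: is_derive1_comp.
  by apply: is_deriveN; exact: is_derive_inv.
have H := is_deriveM HA HB.
have -> : psip k = (fun s : R => s^-1) ^+ k * (expR \o (fun s : R => - s^-1)).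
  by apply/funext => s; rewrite /psip mulrfctE exprfctE.
apply: (is_derive_eq H).
rewrite /psip exprfctE /= /GRing.scale /= opprK.
clear H HA HB; rewrite -!exprVn; set u := t^-1; set E := expR (- u).
clearbody u E; case: k => [|k] /=; rewrite ?mul0r ?mulr0 !exprS; ring.
Qed.

Lemma psi_cont k : {for 0, continuous (psi k)}.
Proof. rewrite /prop_for /continuous_at psi0 //; exact: psi_cont0. Qed.

Lemma psi_derive (k : nat) (t : R) :
  is_derive t 1 (psi k) (psi k.+2 t - k%:R * psi k.+1 t).
Proof.
have [t0|t0|->] := ltgtP t 0.
- rewrite !psi0 ?ltW // mulr0 subr0.
  apply: (@near_eq_is_derive _ _ _ (cst 0)).
  near=> s; rewrite psi0 //; apply: ltW; near: s; exact: lt_nbhsl.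
- rewrite /psi t0 -/(psip k.+2 t) -/(psip k.+1 t).
  apply: (@near_eq_is_derive _ _ _ (psip k)); last exact: psip_derive.
  near=> s; rewrite /psi ifT //; near: s; exact: lt_nbhsr.
- rewrite !psi0 // mulr0 subr0.
  have E : (fun h : R => h^-1 *: ((psi k \o shift 0) (h *: 1) - psi k 0)) = psi k.+1.
    apply/funext => h /=; rewrite [psi k 0]psi0 // subr0 addr0 /GRing.scale /= mulr1.
    rewrite /psi; case: ifP => h0; last by rewrite mulr0.
    by rewrite exprS mulrA.
  have C : (psi k.+1) x @[x --> (0:R)^'] --> 0.
    by have := psi_cont k.+1; rewrite continuous_withinNx psi0.
  apply: DeriveDef; first by apply/cvg_ex; exists 0; rewrite /= E.
  by rewrite /derive E; apply: cvg_lim.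
Unshelve. all: by end_near.
Qed.

Inductive ex1 :=
  | C1 of R | X1 | Add1 of ex1 & ex1 | Mul1 of ex1 & ex1 | Inv1 of ex1
  | Psi1 of nat & ex1.

Fixpoint ev1 (e : ex1) : R -> R :=
  match e with
  | C1 c => fun _ => c
  | X1 => fun t => t
  | Add1 a b => fun t => ev1 a t + ev1 b t
  | Mul1 a b => fun t => ev1 a t * ev1 b t
  | Inv1 a => fun t => (ev1 a t)^-1
  | Psi1 k a => fun t => psi k (ev1 a t)
  end.

Fixpoint dr1 (e : ex1) : ex1 :=
  match e with
  | C1 _ => C1 0
  | X1 => C1 1
  | Add1 a b => Add1 (dr1 a) (dr1 b)
  | Mul1 a b => Add1 (Mul1 (dr1 a) b) (Mul1 a (dr1 b))
  | Inv1 a => Mul1 (C1 (-1)) (Mul1 (dr1 a) (Mul1 (Inv1 a) (Inv1 a)))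
  | Psi1 k a => Mul1 (Add1 (Psi1 k.+2 a) (Mul1 (C1 (- k%:R)) (Psi1 k.+1 a))) (dr1 a)
  end.

Fixpoint wf1 (e : ex1) : Prop :=
  match e with
  | C1 _ | X1 => True
  | Add1 a b | Mul1 a b => wf1 a /\ wf1 b
  | Inv1 a => wf1 a /\ (forall t, ev1 a t != 0)
  | Psi1 _ a => wf1 a
  end.

Lemma wf1_dr e : wf1 e -> wf1 (dr1 e).
Proof.
elim: e => //= [a IHa b IHb [wa wb]|a IHa b IHb [wa wb]|a IHa [wa na]|k a IHa wa].
- by split; [apply: IHa|apply: IHb].
- by split; split => //; [apply: IHa|apply: IHb].
- by split => //; split; [apply: IHa|split].
- by split => //; apply: IHa.
Qed.

Lemma ev1_derive e : wf1 e -> forall t : R, is_derive t 1 (ev1 e) (ev1 (dr1 e) t).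
Proof.
elim: e => /= [c _|_|a IHa b IHb [wa wb]|a IHa b IHb [wa wb]|a IHa [wa na]|k a IHa wa] t.
- by change (is_derive t 1 (cst c) 0); exact: is_derive_cst.
- by change (is_derive t 1 id 1); exact: is_derive_id.
- have := is_deriveD (IHa wa t) (IHb wb t); by rewrite addrfctE.
- have := is_deriveM (IHa wa t) (IHb wb t); rewrite mulrfctE => H.
  apply: (is_derive_eq H); rewrite /GRing.scale /=; ring.
- have := is_derive1_comp (IHa wa t) (is_derive_inv _ (na t)) => H.
  apply: (is_derive_eq H); rewrite -exprVn expr2; ring.
- have := is_derive1_comp (IHa wa t) (psi_derive k (ev1 a t)) => H.
  apply: (is_derive_eq H); ring.
Qed.

Lemma wf1_iter n e : wf1 e -> wf1 (iter n dr1 e).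
Proof. by elim: n => //= n IH /IH; apply: wf1_dr. Qed.

Lemma psi_gt0 k t : 0 < t -> 0 < psi k t.
Proof.
move=> t0; rewrite /psi t0 mulr_gt0 ?expR_gt0 //.
by rewrite exprn_gt0 // invr_gt0.
Qed.

Definition es : ex1 := Mul1 (C1 (3^-1)) (Add1 X1 (C1 (-1))).
Definition eS : ex1 :=
  Mul1 (Psi1 0 es) (Inv1 (Add1 (Psi1 0 es) (Psi1 0 (Add1 (C1 1) (Mul1 (C1 (-1)) es))))).
Definition eg : ex1 :=
  Add1 (Mul1 (Add1 (C1 1) (Mul1 (C1 (-1)) eS)) X1) (Mul1 (C1 2) eS).

Lemma den_neq0 t : psi 0 t + psi 0 (1 + -1 * t) != 0.
Proof.
have [t0|t0] := ltP 0 t.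
  have := psi_gt0 0 t t0; have := psi_ge0 0 (1 + -1 * t).
  by move=> *; rewrite gt_eqF //; lra.
have t1 : 0 < 1 + -1 * t by lra.
have := psi_gt0 0 _ t1; have := psi_ge0 0 t.
by move=> *; rewrite gt_eqF //; lra.
Qed.

Lemma wf_eg : wf1 eg.
Proof. by rewrite /= ; do ! split => //; move=> t; apply: den_neq0. Qed.

Definition gf (n : nat) : R -> R := ev1 (iter n dr1 eg).

Lemma gf_derive n (t : R) : is_derive t 1 (gf n) (gf n.+1 t).
Proof. by rewrite /gf iterS; apply: ev1_derive; apply: wf1_iter; exact: wf_eg. Qed.

Definition Sf (t : R) : R := ev1 eS t.

Lemma gf0E t : gf 0 t = (1 - Sf t) * t + 2 * Sf t.
Proof. by rewrite /gf /= /Sf /= mulN1r. Qed.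

Lemma Sf_ge0 t : 0 <= Sf t.
Proof.
by rewrite /Sf /= mulr_ge0 ?psi_ge0 // invr_ge0 addr_ge0 // ?psi_ge0.
Qed.

Lemma Sf_le1 t : Sf t <= 1.
Proof.
rewrite /Sf /=; set a := psi 0 _; set b := psi 0 _.
have a0 : 0 <= a by apply: psi_ge0.
have b0 : 0 <= b by apply: psi_ge0.
have ab : a + b != 0 by apply: den_neq0.
have ab0 : 0 < a + b by rewrite lt_def ab addr_ge0.
by rewrite ler_pdivrMr // mul1r lerDl.
Qed.

Lemma Sf_small t : t <= 1 -> Sf t = 0.
Proof. by move=> t1; rewrite /Sf /= psi0 ?mul0r //; lra. Qed.

Lemma Sf_large t : 4 <= t -> Sf t = 1.
Proof.
move=> t4; rewrite /Sf /= [psi 0 (1 + _)]psi0; last lra.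
rewrite addr0 mulfV // gt_eqF // psi_gt0 //; lra.
Qed.

Lemma gf0_small t : t <= 1 -> gf 0 t = t.
Proof. by move=> t1; rewrite gf0E Sf_small // subr0 mul1r mulr0 addr0. Qed.

Lemma gf0_large t : 4 <= t -> gf 0 t = 2.
Proof. by move=> t4; rewrite gf0E Sf_large // subrr mul0r add0r mulr1. Qed.

Lemma gf0_ge0 t : 0 <= t -> 0 <= gf 0 t.
Proof.
move=> t0; rewrite gf0E; have := Sf_ge0 t; have := Sf_le1 t; nra.
Qed.

Lemma gf0_ge1 t : 1 <= t -> 1 <= gf 0 t.
Proof.
move=> t0; rewrite gf0E; have := Sf_ge0 t; have := Sf_le1 t; nra.
Qed.

Lemma deriv_const_zero (f : R -> R) (c t df : R) :
  (forall s, 4 < s -> f s = c) -> 4 < t -> is_derive t 1 f df -> df = 0.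
Proof.
move=> fc t4 H.
have H2 : is_derive t 1 (cst c) df.
  apply: (near_eq_is_derive _ H); near=> s; rewrite fc //; near: s; exact: lt_nbhsr.
by move: H2 => [_ <-]; rewrite derive_cst.
Unshelve. all: by end_near.
Qed.

Lemma gf_large n t : 4 < t -> gf n.+1 t = 0.
Proof.
elim: n t => [|n IH] t t4.
  apply: (deriv_const_zero (gf 0) 2 t _ _ t4 (gf_derive 0 t)).
  by move=> s s4; apply: gf0_large; apply: ltW.
exact: (deriv_const_zero (gf n.+1) 0 t _ IH t4 (gf_derive n.+1 t)).
Qed.

Lemma gf_cont n : continuous (gf n).
Proof.
move=> t; have [H _] := gf_derive n t.
exact/differentiable_continuous/derivable1_diffP.
Qed.

Lemma gf_bound n : exists M : R, 0 < M /\ forall t, 0 <= t -> `|gf n.+1 t| <= M.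
Proof.
have c : {within `[0, 4], continuous (fun t => `|gf n.+1 t|)}.
  apply: continuous_subspaceT => t.
  apply: (continuous_comp (gf_cont n.+1 t)); exact: norm_continuous.
have [|c0 _ Hc] := EVT_max _ c; first lra.
exists (`|gf n.+1 c0| + 1); split; first by have := normr_ge0 (gf n.+1 c0); lra.
move=> t t0; have [t4|t4] := leP t 4.
  have := Hc t; rewrite in_itv /= t0 t4 => /(_ isT); lra.
by rewrite gf_large // normr0; have := normr_ge0 (gf n.+1 c0); lra.
Qed.

End OneD.

Section Multi.
Variables (R : realType) (d : nat).
Local Notation V := 'rV[R]_d.


Definition qf (x : V) : R := \sum_i x 0 i ^+ 2.

Lemma coord_derive (x v : V) (j : 'I_d) :
  is_derive x v (fun N : V => N 0 j) (v 0 j).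
Proof.
have @f : {linear V -> R}.
  by exists (fun N : V => N 0 j); do 2![eexists]; do ?[constructor];
     rewrite ?mxE// => ? *; rewrite ?mxE//; move=> ?; rewrite !mxE.
rewrite (_ : (fun _ => _) = f) //.
have fc : continuous f by exact: coord_continuous.
apply: DeriveDef; first exact/diff_derivable/linear_differentiable.
by rewrite deriveE ?diff_lin //; exact: linear_differentiable.
Qed.

Lemma coord_diff (x : V) (j : 'I_d) : differentiable (fun N : V => N 0 j) x.
Proof. exact: differentiable_coord. Qed.

Lemma qfE : qf = \sum_(i < d) (fun N : V => N 0 i * N 0 i).
Proof. by rewrite fct_sumE; apply/funext => x; rewrite /qf; apply: eq_bigr => i _; rewrite expr2. Qed.

Lemma qf_diff (x : V) : differentiable qf x.
Proof.
rewrite qfE; apply: differentiable_sum => i.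
by apply: differentiableM; exact: coord_diff.
Qed.

Lemma qf_derive (x : V) (i : 'I_d) : is_derive x (ebasis i) qf (2 * x 0 i).
Proof.
rewrite qfE.
have H : forall j, is_derive x (ebasis i) (fun N : V => N 0 j * N 0 j)
   (x 0 j * (ebasis i) 0 j + x 0 j * (ebasis i) 0 j).
  move=> j; have := is_deriveM (coord_derive x (ebasis i) j) (coord_derive x (ebasis i) j).
  by rewrite mulrfctE.
apply: (is_derive_eq (is_derive_sum H)).
rewrite (bigD1 i) //= big1 ?addr0; first by rewrite /ebasis mxE !eqxx /=; ring.
by move=> j ji; rewrite /ebasis mxE /= (negbTE ji) mulr0 addr0.
Qed.

Inductive exd :=
  | CC of R | Co of 'I_d | AddD of exd & exd | MulD of exd & exd | G of nat.

Fixpoint evd (e : exd) : V -> R :=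
  match e with
  | CC c => fun _ => c
  | Co j => fun x => x 0 j
  | AddD a b => fun x => evd a x + evd b x
  | MulD a b => fun x => evd a x * evd b x
  | G n => fun x => gf R n (qf x)
  end.

Fixpoint drd (i : 'I_d) (e : exd) : exd :=
  match e with
  | CC _ => CC 0
  | Co j => CC ((ebasis i : V) 0 j)
  | AddD a b => AddD (drd i a) (drd i b)
  | MulD a b => AddD (MulD (drd i a) b) (MulD a (drd i b))
  | G n => MulD (CC 2) (MulD (Co i) (G n.+1))
  end.

Lemma G_diff n (x : V) : differentiable (fun y => gf R n (qf y)) x.
Proof.
apply: (@differentiable_comp _ _ _ _ qf (gf R n)); first exact: qf_diff.
by have [H _] := gf_derive R n (qf x); exact/derivable1_diffP.
Qed.

Lemma G_derive n (x : V) i :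
  is_derive x (ebasis i) (fun y => gf R n (qf y)) (2 * (x 0 i * gf R n.+1 (qf x))).
Proof.
apply: DeriveDef; first exact/diff_derivable/G_diff.
rewrite deriveE; last exact: G_diff.
have dg : differentiable (gf R n) (qf x).
  by have [H _] := gf_derive R n (qf x); exact/derivable1_diffP.
rewrite (@diff_comp _ _ _ _ qf (gf R n)) //; last exact: qf_diff.
rewrite /= diff1E // -deriveE; last exact: qf_diff.
have [_ ->] := qf_derive x i.
have [_ E] := gf_derive R n (qf x).
by rewrite derive1E E /GRing.scale /= mulrA.
Qed.

Lemma evd_main e (x : V) : differentiable (evd e) x /\
  forall i, is_derive x (ebasis i) (evd e) (evd (drd i e) x).
Proof.
elim: e x => /= [c|j|a IHa b IHb|a IHa b IHb|n] x.
- split; first exact: differentiable_cst.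
  by move=> i; exact: is_derive_cst.
- split; first exact: coord_diff.
  by move=> i; exact: coord_derive.
- have [da Da] := IHa x; have [db Db] := IHb x.
  split; first by have := differentiableD da db; rewrite addrfctE.
  by move=> i; have := is_deriveD (Da i) (Db i); rewrite addrfctE.
- have [da Da] := IHa x; have [db Db] := IHb x.
  split; first by have := differentiableM da db; rewrite mulrfctE.
  move=> i; have := is_deriveM (Da i) (Db i); rewrite mulrfctE => H.
  by apply: (is_derive_eq H); rewrite /GRing.scale /=; ring.
- split; first exact: G_diff.
  by move=> i; exact: G_derive.
Qed.

Lemma dpartial_evd s e : dpartial s (evd e) = evd (foldr drd e s).
Proof.
elim: s => //= i s IH; rewrite IH; apply/funext => x.
by have [_ D] := evd_main (foldr drd e s) x; have [_ ->] := D i.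
Qed.

Lemma smooth_evd e : smooth (evd e).
Proof.
move=> s; rewrite dpartial_evd; split.
  move=> x; apply: differentiable_continuous; exact: (evd_main _ x).1.
move=> i x; have [_ D] := evd_main (foldr drd e s) x; by have [] := D i.
Qed.

Lemma sq_le (u v : R) : 0 <= u -> 0 <= v -> u ^+ 2 <= v ^+ 2 -> u <= v.
Proof. move=> u0 v0 h; nra. Qed.

Lemma qf_ge0 (x : V) : 0 <= qf x.
Proof. by apply: sumr_ge0 => i _; apply: sqr_ge0. Qed.

Lemma enorm_sq (x : V) : enorm x ^+ 2 = qf x.
Proof. by rewrite /enorm sqr_sqrtr // qf_ge0. Qed.

Lemma enorm_ge0 (x : V) : 0 <= enorm x.
Proof. exact: sqrtr_ge0. Qed.

Lemma frobnorm_ge0 (A : 'M[R]_d) : 0 <= frobnorm A.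
Proof. exact: sqrtr_ge0. Qed.

Definition fF : V -> R := evd (G 0).

Lemma grad_entry x i : grad fF x 0 i = 2 * (x 0 i * gf R 1 (qf x)).
Proof. by rewrite /grad mxE /fF dpartial_evd. Qed.

Lemma hess_entry x i j : hess fF x i j =
  0 * (x 0 j * gf R 1 (qf x)) +
  2 * ((ebasis i : V) 0 j * gf R 1 (qf x) + x 0 j * (2 * (x 0 i * gf R 2 (qf x)))).
Proof. by rewrite /hess mxE /fF dpartial_evd. Qed.

Lemma grad_sq x : enorm (grad fF x) ^+ 2 = 4 * gf R 1 (qf x) ^+ 2 * qf x.
Proof.
rewrite enorm_sq /qf mulr_sumr; apply: eq_bigr => i _.
by rewrite grad_entry; ring.
Qed.

End Multi.

Arguments qf {R d}. Arguments fF {R d}.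

Section Arith.
Variable R : realFieldType.

Lemma sq_le' (u v : R) : 0 <= u -> 0 <= v -> u ^+ 2 <= v ^+ 2 -> u <= v.
Proof. move=> u0 v0 h; nra. Qed.

Definition KK (M1 C2 : R) := 8 * M1 ^+ 2 * C2 ^+ 2 * (1 + C2 ^+ 2).
Definition CC3 (M1 H C2 : R) := 4 * C2 * M1 + 2 * C2 ^+ 2 * H + 4 * KK M1 C2 + 1.

Lemma CC3_gt0 M1 H C2 : 0 <= M1 -> 0 <= H -> 0 <= C2 -> 0 < CC3 M1 H C2.
Proof.
move=> m h c; rewrite /CC3 /KK.
have t1 : 0 <= 4 * C2 * M1 by rewrite !mulr_ge0.
have t2 : 0 <= 2 * C2 ^+ 2 * H by rewrite !mulr_ge0 // ?sqr_ge0.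
have t3 : 0 <= 4 * (8 * M1 ^+ 2 * C2 ^+ 2 * (1 + C2 ^+ 2)).
  by rewrite !mulr_ge0 // ?sqr_ge0 // addr_ge0 // sqr_ge0.
lra.
Qed.

Lemma arith (M1 H C2 a b dl G Hz fx qz : R) :
  0 <= M1 -> 0 <= H -> 0 < C2 -> 0 <= a -> 0 <= b -> 0 < dl -> 0 <= G -> 0 <= Hz ->
  b <= C2 * (a + dl) -> b <= C2 -> G ^+ 2 <= 4 * M1 ^+ 2 * qz ->
  qz <= 2 * a ^+ 2 + 2 * b ^+ 2 -> G <= 4 * M1 -> Hz <= H ->
  (a <= 1 -> fx = a ^+ 2) -> (1 < a -> 1 <= fx) ->
  b * G <= CC3 M1 H C2 * (fx + dl) /\ b ^+ 2 * Hz <= CC3 M1 H C2 * (fx + dl ^+ 2).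
Proof.
move=> M1p Hp C2p a0 b0 dp G0 Hz0 hb1 hb2 hG hq hG2 hH hf1 hf2.
have C2n : 0 <= C2 := ltW C2p.
set C3 := CC3 M1 H C2; set K := KK M1 C2.
have K0 : 0 <= K.
  rewrite /K /KK; have := sqr_ge0 M1; have := sqr_ge0 C2; move=> p q.
  rewrite !mulr_ge0 //; lra.
have C3a : 4 * C2 * M1 <= C3.
  have : 0 <= 2 * C2 ^+ 2 * H by rewrite !mulr_ge0 // ?sqr_ge0.
  rewrite /C3 /CC3 -/K; lra.
have C3b : 2 * C2 ^+ 2 * H <= C3.
  have : 0 <= 4 * C2 * M1 by rewrite !mulr_ge0 // ltW.
  rewrite /C3 /CC3 -/K; lra.
have C3c : 4 * K <= C3 ^+ 2.
  have h1 : 4 * K + 1 <= C3.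
    have : 0 <= 4 * C2 * M1 by rewrite !mulr_ge0 // ltW.
    have : 0 <= 2 * C2 ^+ 2 * H by rewrite !mulr_ge0 // ?sqr_ge0.
    rewrite /C3 /CC3 -/K; lra.
  nra.
have C30 : 0 <= C3 by rewrite ltW // CC3_gt0 // ltW.
have bG : b * G <= C2 * (4 * M1) by apply: ler_pM.
have b2 : b ^+ 2 <= C2 ^+ 2 by rewrite !expr2; apply: ler_pM.
have bHz : b ^+ 2 * Hz <= b ^+ 2 * H by apply: ler_wpM2l => //; exact: sqr_ge0.
have [a1|a1] := leP a 1.
- rewrite (hf1 a1).
  have b3 : b ^+ 2 <= 2 * C2 ^+ 2 * (a ^+ 2 + dl ^+ 2).
    have : b ^+ 2 <= (C2 * (a + dl)) ^+ 2 by rewrite !expr2; apply: ler_pM.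
    have : 0 <= (a - dl) ^+ 2 by exact: sqr_ge0.
    have : 0 <= C2 ^+ 2 by exact: sqr_ge0.
    move=> *; nra.
  split; last first.
    apply: (le_trans bHz).
    have : b ^+ 2 * H <= 2 * C2 ^+ 2 * (a ^+ 2 + dl ^+ 2) * H by apply: ler_wpM2r.
    have : 2 * C2 ^+ 2 * H * (a ^+ 2 + dl ^+ 2) <= C3 * (a ^+ 2 + dl ^+ 2).
      by apply: ler_wpM2r => //; rewrite addr_ge0 // sqr_ge0.
    move=> *; nra.
  have [d1|d1] := leP 1 dl.
    have : C3 <= C3 * (a ^+ 2 + dl) by rewrite ler_peMr //; have := sqr_ge0 a; lra.
    nra.
  set s := a + dl.
  have s0 : 0 <= s by rewrite /s; lra.
  have Gs : G ^+ 2 <= 8 * M1 ^+ 2 * (1 + C2 ^+ 2) * s ^+ 2.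
    have h1 : b ^+ 2 <= C2 ^+ 2 * s ^+ 2 by rewrite -exprMn !expr2; apply: ler_pM.
    have h2 : a ^+ 2 <= s ^+ 2 by rewrite !expr2; apply: ler_pM => //; rewrite /s; lra.
    have h3 : 0 <= M1 ^+ 2 := sqr_ge0 M1.
    have h4 : G ^+ 2 <= 8 * M1 ^+ 2 * (a ^+ 2 + b ^+ 2).
      apply: (le_trans hG); have := ler_wpM2l (x := 4 * M1 ^+ 2) _ hq; nra.
    have h5 : a ^+ 2 + b ^+ 2 <= (1 + C2 ^+ 2) * s ^+ 2 by rewrite mulrDl mul1r; lra.
    apply: (le_trans h4); rewrite -!mulrA; apply: ler_wpM2l => //.
    by apply: ler_wpM2l => //; apply: ler_wpM2l.
  have L : (b * G) ^+ 2 <= K * (s ^+ 2) ^+ 2.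
    rewrite exprMn.
    have h1 : b ^+ 2 <= C2 ^+ 2 * s ^+ 2 by rewrite -exprMn !expr2; apply: ler_pM.
    have : b ^+ 2 * G ^+ 2 <= (C2 ^+ 2 * s ^+ 2) * (8 * M1 ^+ 2 * (1 + C2 ^+ 2) * s ^+ 2).
      by apply: ler_pM => //; exact: sqr_ge0.
    move=> h; apply: (le_trans h); rewrite /K /KK; rewrite le_eqVlt; apply/orP; left; apply/eqP; ring.
  have U : s ^+ 2 <= 2 * (a ^+ 2 + dl).
    have : dl ^+ 2 <= dl by rewrite expr2 ler_piMl // ltW.
    have : 0 <= (a - dl) ^+ 2 by exact: sqr_ge0.
    rewrite /s; move=> *; nra.
  apply: sq_le'; first by rewrite mulr_ge0.
    by rewrite mulr_ge0 //; have := sqr_ge0 a; lra.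
  apply: (le_trans L).
  have W : (s ^+ 2) ^+ 2 <= 4 * (a ^+ 2 + dl) ^+ 2.
    have : (s ^+ 2) ^+ 2 <= (2 * (a ^+ 2 + dl)) ^+ 2.
      by rewrite !expr2; apply: ler_pM => //; exact: sqr_ge0.
    by move=> h; apply: (le_trans h); rewrite le_eqVlt; apply/orP; left; apply/eqP; ring.
  have : K * (s ^+ 2) ^+ 2 <= K * (4 * (a ^+ 2 + dl) ^+ 2) by apply: ler_wpM2l.
  have : 4 * K * (a ^+ 2 + dl) ^+ 2 <= C3 ^+ 2 * (a ^+ 2 + dl) ^+ 2.
    by apply: ler_wpM2r => //; exact: sqr_ge0.
  move=> *; rewrite exprMn; nra.
- have f1 := hf2 a1.
  split.
    have : C3 <= C3 * (fx + dl) by rewrite ler_peMr //; lra.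
    nra.
  have : C3 <= C3 * (fx + dl ^+ 2) by rewrite ler_peMr //; have := sqr_ge0 dl; lra.
  have : b ^+ 2 * H <= C2 ^+ 2 * H by apply: ler_wpM2r.
  have : 0 <= C2 ^+ 2 * H by rewrite mulr_ge0 // sqr_ge0.
  move=> *; nra.
Qed.

Lemma l1 (e : R) : 0 <= e -> e <= 1 -> e ^+ 2 <= 1.
Proof. move=> *; nra. Qed.
Lemma l2 (e : R) : 2 <= e -> 4 <= e ^+ 2.
Proof. move=> *; nra. Qed.
Lemma l3 (e : R) : 2 < e -> 4 < e ^+ 2.
Proof. move=> *; nra. Qed.
Lemma l4 (e : R) : 1 < e -> 1 <= e ^+ 2.
Proof. move=> *; nra. Qed.
Lemma l5 (q : R) : 0 <= q -> q <= 4 -> q ^+ 2 <= 16.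
Proof. move=> *; nra. Qed.
Lemma l6 (M q : R) : 0 <= q -> q <= 4 -> 4 * M ^+ 2 * q <= (4 * M) ^+ 2.
Proof. move=> *; have := sqr_ge0 M; nra. Qed.
Lemma l7 (g M : R) : `|g| <= M -> g ^+ 2 <= M ^+ 2.
Proof. rewrite ler_norml => /andP[h1 h2]; nra. Qed.
End Arith.

Section M2.
Variables (R : realType) (d : nat).
Local Notation V := 'rV[R]_d.
Lemma hess_sq_le (x : V) : \sum_i \sum_j hess fF x i j ^+ 2 <=
   8 * (d%:R ^+ 2) * gf R 1 (qf x) ^+ 2 + 32 * gf R 2 (qf x) ^+ 2 * qf x ^+ 2.
Proof.
set g1 := gf R 1 (qf x); set g2 := gf R 2 (qf x).
have E1 : \sum_(i < d) \sum_(j < d) (8 * g1 ^+ 2) = 8 * (d%:R ^+ 2) * g1 ^+ 2.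
  rewrite !sumr_const !card_ord. ring.
have E2 : \sum_(i < d) \sum_(j < d) (32 * g2 ^+ 2 * (x 0 i ^+ 2 * x 0 j ^+ 2))
          = 32 * g2 ^+ 2 * qf x ^+ 2.
  rewrite [qf x ^+ 2]expr2 /qf mulr_suml mulr_sumr; apply: eq_bigr => i _.
  rewrite mulr_sumr mulr_sumr; apply: eq_bigr => j _; ring.
rewrite -E1 -E2 -big_split /=; apply: ler_sum => i _.
rewrite -big_split /=; apply: ler_sum => j _.
rewrite hess_entry.
set e := (ebasis i : V) 0 j.
have hd : e ^+ 2 <= 1.
  by rewrite /e /ebasis mxE; case: (_ && _) => /=; rewrite ?expr0n ?expr1n.
rewrite -/g1 -/g2; clearbody g1 g2 e.
have -> : 0 * (x 0 j * g1) + 2 * (e * g1 + x 0 j * (2 * (x 0 i * g2)))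
   = 2 * (e * g1) + 4 * (x 0 i * x 0 j * g2) by ring.
have -> : 32 * g2 ^+ 2 * (x 0 i ^+ 2 * x 0 j ^+ 2) = 32 * (x 0 i * x 0 j * g2) ^+ 2 by ring.
set A := e * g1; set B := x 0 i * x 0 j * g2.
have h1 : (2 * A + 4 * B) ^+ 2 <= 8 * A ^+ 2 + 32 * B ^+ 2.
  rewrite -subr_ge0; have -> : 8 * A ^+ 2 + 32 * B ^+ 2 - (2 * A + 4 * B) ^+ 2 = (2 * A - 4 * B) ^+ 2 by ring.
  exact: sqr_ge0.
have h2 : A ^+ 2 <= g1 ^+ 2.
  rewrite /A exprMn -[X in _ <= X]mul1r; apply: ler_wpM2r; [exact: sqr_ge0 | exact: hd].
lra.
Qed.
Lemma qf_comb (x y : V) (r : R) : 0 <= r -> r <= 1 ->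
  qf (x + r *: y) <= 2 * qf x + 2 * qf y.
Proof.
move=> r0 r1; rewrite /qf !mulr_sumr -big_split /=; apply: ler_sum => i _.
rewrite !mxE; set u := x 0 i; set w := y 0 i.
have h1 : 0 <= (u - r * w) ^+ 2 := sqr_ge0 _.
have h2 : (r * w) ^+ 2 <= w ^+ 2.
  rewrite exprMn -[X in _ <= X]mul1r; apply: ler_wpM2r; first exact: sqr_ge0.
  by rewrite expr2; have := mulr_ge0 r0 r0; nra.
have -> : (u + r * w) ^+ 2 = 2 * u ^+ 2 + 2 * (r * w) ^+ 2 - (u - r * w) ^+ 2 by ring.
lra.
Qed.

Lemma g1_bound M1 (z : V) : (forall t, 0 <= t -> `|gf R 1 t| <= M1) ->
  gf R 1 (qf z) ^+ 2 <= M1 ^+ 2.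
Proof.
move=> HM; have := HM _ (qf_ge0 _ _ z); rewrite ler_norml => /andP[h1 h2]; nra.
Qed.

End M2.
Arguments qf_ge0 {R d}. Arguments grad_sq {R d}. Arguments hess_sq_le {R d}.
Arguments enorm_sq {R d}. Arguments enorm_ge0 {R d}. Arguments frobnorm_ge0 {R d}.
Arguments qf_comb {R d}. Arguments g1_bound {R d}. Arguments sq_le {R}.
Arguments CC3 {R}. Arguments KK {R}. Arguments arith {R}. Arguments CC3_gt0 {R}.
Arguments l1 {R}. Arguments l2 {R}. Arguments l3 {R}. Arguments l4 {R}. Arguments l5 {R}. Arguments l6 {R}. Arguments l7 {R}.

Local Close Scope classical_set_scope.

Theorem lemma5p2 (R : realType) (d : nat) :
  exists f : 'rV[R]_d -> R,
    (forall x, 0 <= f x) /\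
    smooth f /\
    (forall x, enorm x <= 1 -> f x = enorm x ^+ 2) /\
    (forall x, 2 <= enorm x -> f x = 2) /\
    (exists C1 : R, 0 < C1 /\
       forall x, enorm (grad f x) + frobnorm (hess f x)
                 <= C1 * ((enorm x <= 2 :> R) : bool)%:R) /\
    (forall C2 : R, 0 < C2 ->
       exists C3 : R, 0 < C3 /\
         forall (delta r : R) (x y : 'rV[R]_d),
           0 < delta -> 0 <= r -> r <= 1 ->
           enorm y <= C2 * Num.min (enorm x + delta) 1 ->
           enorm y * enorm (grad f (x + r *: y)) <= C3 * (f x + delta) /\
           enorm y ^+ 2 * frobnorm (hess f (x + r *: y))
             <= C3 * (f x + delta ^+ 2)).
Proof.
have [M1 [M1p HM1]] := gf_bound R 0.
have [M2 [M2p HM2]] := gf_bound R 1.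
pose H := Num.sqrt (8 * d%:R ^+ 2 * M1 ^+ 2 + 512 * M2 ^+ 2).
have H0 : 0 <= H := sqrtr_ge0 _.
have fFE : forall x : 'rV[R]_d, fF x = gf R 0 (qf x) by [].
have G1 : forall z : 'rV[R]_d, enorm (grad fF z) ^+ 2 <= 4 * M1 ^+ 2 * qf z.
  move=> z; rewrite grad_sq; have := g1_bound _ z HM1; have := qf_ge0 z.
  move=> q0 g; have := ler_wpM2r q0 g; move=> h.
  rewrite -[4 * _ * qf z]mulrA -[4 * M1 ^+ 2 * qf z]mulrA; apply: ler_wpM2l => //.
have Z : forall z : 'rV[R]_d, 4 < qf z ->
    enorm (grad fF z) = 0 /\ frobnorm (hess fF z) = 0.
  move=> z qz; have g1 := gf_large R 0 _ qz; have g2 := gf_large R 1 _ qz.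
  split.
    by apply/eqP; rewrite -sqrf_eq0 grad_sq g1 expr0n /= mulr0 mul0r.
  apply/eqP; rewrite eq_le frobnorm_ge0 andbT /frobnorm -[X in _ <= X]sqrtr0 ler_sqrt //.
  by have := hess_sq_le z; rewrite g1 g2 !expr0n /= !mulr0 !mul0r addr0.
have G3 : forall z : 'rV[R]_d, enorm (grad fF z) <= 4 * M1.
  move=> z; have [qz|qz] := leP (qf z) 4.
    apply: sq_le; [exact: enorm_ge0 | by rewrite mulr_ge0 // ltW |].
    apply: (le_trans (G1 z)); apply: l6 => //; exact: qf_ge0.
  by rewrite (Z z qz).1 mulr_ge0 // ltW.
have H1 : forall z : 'rV[R]_d, frobnorm (hess fF z) <= H.
  have Hin : 0 <= 8 * d%:R ^+ 2 * M1 ^+ 2 + 512 * M2 ^+ 2 :> R.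
    have h1 : 0 <= d%:R ^+ 2 * M1 ^+ 2 :> R by rewrite mulr_ge0 // sqr_ge0.
    have h2 : 0 <= M2 ^+ 2 :> R by rewrite sqr_ge0.
    lra.
  move=> z; rewrite /frobnorm /H ler_sqrt //.
  apply: (le_trans (hess_sq_le z)).
  have [qz|qz] := leP (qf z) 4.
    have a1 := g1_bound _ z HM1.
    have a2 : gf R 2 (qf z) ^+ 2 <= M2 ^+ 2.
      exact: l7 (HM2 _ (qf_ge0 z)).
    have a3 : qf z ^+ 2 <= 16 by apply: l5 => //; exact: qf_ge0.
    have a4 : 0 <= d%:R ^+ 2 :> R by exact: sqr_ge0.
    have b1 : 8 * d%:R ^+ 2 * gf R 1 (qf z) ^+ 2 <= 8 * d%:R ^+ 2 * M1 ^+ 2.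
      by apply: ler_wpM2l => //; rewrite mulr_ge0.
    have b2 : gf R 2 (qf z) ^+ 2 * qf z ^+ 2 <= M2 ^+ 2 * 16.
      by apply: ler_pM => //; exact: sqr_ge0.
    apply: lerD => //; rewrite -mulrA.
    have -> : 512 * M2 ^+ 2 = 32 * (M2 ^+ 2 * 16) by ring.
    by apply: ler_wpM2l.
  by rewrite (gf_large R 0 _ qz) (gf_large R 1 _ qz) !expr0n /= !mulr0 !mul0r addr0.
exists fF; split.
  by move=> x; rewrite fFE; apply: gf0_ge0; exact: qf_ge0.
split; first exact: smooth_evd.
split.
  move=> x x1; rewrite fFE enorm_sq gf0_small // -enorm_sq.
  by apply: l1 => //; exact: enorm_ge0.
split.
  move=> x x2; rewrite fFE gf0_large // -enorm_sq; exact: l2.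
split.
  exists (4 * M1 + H + 1); split; first lra.
  move=> x; have [x2|x2] := leP (enorm x) 2.
    by rewrite mulr1; have := G3 x; have := H1 x; lra.
  have qx : 4 < qf x by rewrite -enorm_sq; exact: l3.
  by rewrite mulr0 (Z x qx).1 (Z x qx).2 addr0.
move=> C2 C2p; exists (CC3 M1 H C2); split.
  by apply: CC3_gt0 => //; exact: ltW.
move=> dl r x y dp r0 r1 hy.
have hm1 : Num.min (enorm x + dl) 1 <= enorm x + dl by rewrite ge_min lexx.
have hm2 : Num.min (enorm x + dl) 1 <= 1 by rewrite ge_min lexx orbT.
apply: (arith M1 H C2 (enorm x) (enorm y) dl (enorm (grad fF (x + r *: y)))
  (frobnorm (hess fF (x + r *: y))) (fF x) (qf (x + r *: y))).
- exact: ltW.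
- exact: H0.
- exact: C2p.
- exact: enorm_ge0.
- exact: enorm_ge0.
- exact: dp.
- exact: enorm_ge0.
- exact: frobnorm_ge0.
- by apply: (le_trans hy); apply: ler_wpM2l => //; exact: ltW.
- by apply: (le_trans hy); rewrite -[X in _ <= X]mulr1; apply: ler_wpM2l => //; exact: ltW.
- exact: G1.
- by rewrite !enorm_sq; apply: qf_comb.
- exact: G3.
- exact: H1.
- move=> a1; rewrite fFE gf0_small -enorm_sq //.
  by apply: l1 => //; exact: enorm_ge0.
- move=> a1; rewrite fFE; apply: gf0_ge1; rewrite -enorm_sq; exact: l4.
Qed.
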